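(* Let $a\in\mathbb{R}^n$, $d\in\mathbb{R}^m$ with $\|a\|\ge\|d\|$. Let $(\bar x,\bar y)\in\mathbb{R}^{n+m}$ satisfy $\|\bar x\|>\|\bar y\|$ and $a^\mathsf{T}\bar x+d^\mathsf{T}\bar y\le0$, let $\lambda=\bar x/\|\bar x\|$, and let $\phi_\lambda(y)=\max_x\{\lambda^\mathsf{T} x:\|x\|\le\|y\|,\ a^\mathsf{T} x+d^\mathsf{T} y\le0\}$ for $y\in\mathbb{R}^m$. Let $L=\{(x,y):\lambda^\mathsf{T} x=0,\ y=0\}$, so that $L^\perp=\langle\lambda\rangle\times\mathbb{R}^m$ is identified with $\mathbb{R}\times\mathbb{R}^m$ via $(t\lambda,y)\leftrightarrow(t,y)$. Then the orthogonal projection of $(\bar x,\bar y)$ onto $L^\perp$, namely $(\lambda^\mathsf{T}\bar x,\bar y)$, lies in the interior of the epigraph $\{(t,y)\in\mathbb{R}\times\mathbb{R}^m:\phi_\lambda(y)\le t\}$.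
   Context: $\|\cdot\|$ is the Euclidean norm. *)

(* Defs.v *)
From HB Require Import structures.
From mathcomp Require Import all_boot all_order all_algebra.
From mathcomp Require Import all_classical all_reals all_analysis.
Set Implicit Arguments. Unset Strict Implicit. Unset Printing Implicit Defensive.
Import Order.TTheory GRing.Theory Num.Theory.
Import numFieldNormedType.Exports.
Local Open Scope classical_set_scope.
Local Open Scope ring_scope.

Definition dotp (R : realType) (n : nat) (u v : 'rV[R]_n) : R :=
  \sum_(i < n) u ord0 i * v ord0 i.

Definition enorm (R : realType) (n : nat) (u : 'rV[R]_n) : R :=
  Num.sqrt (dotp u u).

Definition phi (R : realType) (n m : nat) (a lam : 'rV[R]_n) (d : 'rV[R]_m)
    (y : 'rV[R]_m) : R :=
  sup [set dotp lam x | x in [set x : 'rV[R]_n |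
         enorm x <= enorm y /\ dotp a x + dotp d y <= 0]].

Definition epi (R : realType) (n m : nat) (a lam : 'rV[R]_n) (d : 'rV[R]_m)
    : set (R * 'rV[R]_m) :=
  [set p | phi a lam d p.2 <= p.1].

(* Main.v *)
Require Import Defs.
From HB Require Import structures.
From mathcomp Require Import all_boot all_order all_algebra.
From mathcomp Require Import all_classical all_reals all_analysis.
From mathcomp Require Import ring lra.
Import Order.TTheory GRing.Theory Num.Theory.
Import numFieldNormedType.Exports.
Local Open Scope classical_set_scope.
Local Open Scope ring_scope.

Lemma dotp_ge0 (R : realType) k (u : 'rV[R]_k) : 0 <= dotp u u.
Proof. by apply: sumr_ge0 => i _; rewrite -expr2 sqr_ge0. Qed.

Lemma dotpZl (R : realType) k (c : R) (u v : 'rV[R]_k) :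
  dotp (c *: u) v = c * dotp u v.
Proof. rewrite /dotp mulr_sumr; apply: eq_bigr => i _; by rewrite mxE mulrA. Qed.

Lemma cs2 (R : realType) k (u v : 'rV[R]_k) :
  dotp u v ^+ 2 <= dotp u u * dotp v v.
Proof.
rewrite /dotp.
set U := fun i => u ord0 i; set V := fun i => v ord0 i.
rewrite -/(U _) -/(V _).
have E : (\sum_i U i * V i)^+2 = \sum_i \sum_j (U i * V i) * (U j * V j).
  by rewrite expr2 mulr_suml; apply: eq_bigr => i _; rewrite mulr_sumr.
have F : (\sum_i U i * U i) * (\sum_j V j * V j)
   = \sum_i \sum_j (U i * U i) * (V j * V j).
  by rewrite mulr_suml; apply: eq_bigr => i _; rewrite mulr_sumr.
have G : 0 <= \sum_i \sum_j (U i * V j - U j * V i)^+2.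
  by apply: sumr_ge0 => i _; apply: sumr_ge0 => j _; exact: sqr_ge0.
have H : \sum_i \sum_j (U i * V j - U j * V i)^+2 =
   \sum_i \sum_j ((U i * U i) * (V j * V j)) +
   \sum_i \sum_j ((U j * U j) * (V i * V i)) -
   (\sum_i \sum_j ((U i * V i) * (U j * V j))) *+ 2.
  transitivity (\sum_i \sum_j ((U i * U i) * (V j * V j) +
     (U j * U j) * (V i * V i) - ((U i * V i) * (U j * V j)) *+ 2)).
    by apply: eq_bigr => i _; apply: eq_bigr => j _; rewrite mulr2n; ring.
  rewrite (eq_bigr (fun i => \sum_j ((U i * U i) * (V j * V j)) +
     \sum_j ((U j * U j) * (V i * V i)) - (\sum_j ((U i * V i) * (U j * V j))) *+ 2)).
    by rewrite sumrB big_split sumrMnl.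
  by move=> i _; rewrite sumrB big_split sumrMnl.
rewrite [\sum_i \sum_j (U j * U j * (V i * V i))]exchange_big /= in H.
rewrite E F; rewrite H mulr2n in G; lra.
Qed.

Lemma cs (R : realType) k (u v : 'rV[R]_k) :
  dotp u v <= enorm u * enorm v.
Proof.
rewrite /enorm -sqrtrM ?dotp_ge0 //.
apply: le_trans (ler_norm _) _.
by rewrite -sqrtr_sqr ler_sqrt ?cs2 // mulr_ge0 ?dotp_ge0.
Qed.

Lemma sum_cont (R : realType) k (T : topologicalType) (s : seq 'I_k)
  (f : 'I_k -> T -> R) :
  (forall i, continuous (f i)) -> continuous (fun x => \sum_(i <- s) f i x).
Proof.
move=> hf; elim: s => [|i s IH].
  under eq_fun do rewrite big_nil. exact: cst_continuous.
under eq_fun do rewrite big_cons.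
by move=> x; apply: continuousD; [exact: hf | exact: IH].
Qed.

Lemma enorm_cont (R : realType) k : continuous (@enorm R k).
Proof.
move=> x; apply: continuous_comp; last exact: sqrt_continuous.
apply: sum_cont => i y.
apply: (@continuousM _ _ (fun x0 : 'rV[R]_k => x0 ord0 i) (fun x0 : 'rV[R]_k => x0 ord0 i)); apply: (@coord_continuous R 1 k ord0 i).
Qed.

Theorem lemma1 (R : realType) (n m : nat)
    (a xbar : 'rV[R]_n) (d ybar : 'rV[R]_m) :
  enorm a >= enorm d ->
  enorm xbar > enorm ybar ->
  dotp a xbar + dotp d ybar <= 0 ->
  let lam := (enorm xbar)^-1 *: xbar in
  (interior (epi a lam d)) (dotp lam xbar, ybar).
Proof.
move=> hda hxy hax lam.
have nx : 0 < enorm xbar by apply: le_lt_trans (sqrtr_ge0 _) hxy.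
have key : forall y, phi a lam d y <= enorm y.
  move=> y; rewrite /phi.
  set S := [set _ | _ in _].
  have [->|ne] := eqVneq S set0; first by rewrite sup0 sqrtr_ge0.
  apply: ge_sup; first by apply/set0P.
  move=> _ [x [hx _] <-]; apply: le_trans hx.
  rewrite /lam dotpZl -(ler_pM2l nx) mulrA mulfV ?gt_eqF // mul1r.
  exact: cs.
have lx : dotp lam xbar = enorm xbar.
  rewrite /lam dotpZl -[dotp xbar xbar](sqr_sqrtr (@dotp_ge0 _ _ xbar)) -/(enorm xbar).
  by rewrite expr2 mulrA mulVf ?gt_eqF // mul1r.
have hf : continuous (fun p : R * 'rV[R]_m => p.1 - enorm p.2).
  move=> p; apply: continuousB; first exact: cvg_fst.
  apply: continuous_comp; first exact: cvg_snd.
  exact: enorm_cont.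
rewrite /interior /=.
have : nbhs (dotp lam xbar, ybar)
   ((fun p : R * 'rV[R]_m => p.1 - enorm p.2) @^-1` [set r | 0 < r]).
  apply: hf; apply: open_nbhs_nbhs; split; first exact: open_gt.
  by rewrite /= lx subr_gt0.
apply: filterS => -[t y] /= h; rewrite /epi /=.
apply: le_trans (key y) _; rewrite subr_gt0 in h; exact: ltW.
Qed.
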